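(* Let $n\geq 2$ and let $\mathcal{G}=(\mathcal{V},\mathcal{E})$ be a directed graph on $\mathcal{V}=\{1,\ldots,n\}$ in which every node has at least one outgoing edge, with hyperlink matrix $A$, let $m\in(0,1)$, and let $x^*$ be the PageRank vector. Let $\{\phi(k)\}_{k\geq 0}$ be a sequence of subsets $\phi(k)\subset\mathcal{V}$ such that every $i\in\mathcal{V}$ belongs to $\phi(k)$ for infinitely many $k$. Consider the algorithm with initial states $x_i(0)=z_i(0)=m/n$ for all $i$, and for $k\geq 0$ and each $i\in\mathcal{V}$, $$x_i(k+1)=x_i(k)+\sum_{j\in\mathcal{L}_i^{\text{in}}\cap\phi(k)}\frac{1-m}{n_j}z_j(k),$$ $$z_i(k+1)=\begin{cases}\displaystyle\sum_{j\in\mathcal{L}_i^{\text{in}}\cap\phi(k)}\frac{1-m}{n_j}z_j(k)&\text{if } i\in\phi(k),\\ \displaystyle z_i(k)+\sum_{j\in\mathcal{L}_i^{\text{in}}\cap\phi(k)}\frac{1-m}{n_j}z_j(k)&\text{otherwise.}\end{cases}$$ Then $x(k)\to x^*$ as $k\to\infty$. If, in addition, there is $T>0$ such that each page belongs to at least one of $\phi(k),\phi(k+1),\ldots,\phi(k+T-1)$ for every $k\geq 0$, then the convergence is exponential, i.e., there exist $C>0$ and $\rho\in(0,1)$ with $\|x(k)-x^*\|\leq C\rho^k$ for all $k\geq 0$.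
   Context: Write $(i,j)\in\mathcal{E}$ if page $i$ has a link to page $j$. $\mathcal{L}_j^{\text{out}}=\{i:(j,i)\in\mathcal{E}\}$, $\mathcal{L}_i^{\text{in}}=\{j:(j,i)\in\mathcal{E}\}$, and $n_j=|\mathcal{L}_j^{\text{out}}|\geq 1$. The hyperlink matrix $A=(a_{ij})$ is defined by $a_{ij}=1/n_j$ if $i\in\mathcal{L}_j^{\text{out}}$ and $a_{ij}=0$ otherwise (column stochastic). The PageRank vector $x^*$ satisfies $x^*=(1-m)Ax^*+\frac{m}{n}\mathbf{1}_n$ and $\mathbf{1}_n^Tx^*=1$. Here $x(k)=(x_1(k),\ldots,x_n(k))^T$. *)

(* Defs.v *)
From HB Require Import structures.
From mathcomp Require Import all_boot all_order all_algebra.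
From mathcomp Require Import all_classical all_reals all_analysis.
Set Implicit Arguments. Unset Strict Implicit. Unset Printing Implicit Defensive.
Import Order.TTheory GRing.Theory Num.Theory.
Import numFieldNormedType.Exports.
Local Open Scope ring_scope.

(* A directed graph on V = 'I_n : E j i means page j links to page i. *)

Definition outdeg (n : nat) (E : rel 'I_n) (j : 'I_n) : nat := #|[set i | E j i]|.

Definition hyperlink (R : fieldType) (n : nat) (E : rel 'I_n) : 'M[R]_n :=
  \matrix_(i, j) (if E j i then (outdeg E j)%:R^-1 else 0).

Definition is_pagerank (R : fieldType) (n : nat) (E : rel 'I_n) (m : R)
    (xs : 'cV[R]_n) : Prop :=
  xs = (1 - m) *: (hyperlink R E *m xs) + (m / n%:R) *: const_mx 1
  /\ \sum_(i < n) xs i 0 = 1.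

Definition inflow (R : fieldType) (n : nat) (E : rel 'I_n) (m : R)
    (phi : {set 'I_n}) (z : 'I_n -> R) (i : 'I_n) : R :=
  \sum_(j < n | E j i && (j \in phi)) (1 - m) / (outdeg E j)%:R * z j.

Fixpoint algo (R : fieldType) (n : nat) (E : rel 'I_n) (m : R)
    (phi : nat -> {set 'I_n}) (k : nat) : ('I_n -> R) * ('I_n -> R) :=
  match k with
  | 0 => (fun _ => m / n%:R, fun _ => m / n%:R)
  | k'.+1 =>
      let xz := algo E m phi k' in
      (fun i => xz.1 i + inflow E m (phi k') xz.2 i,
       fun i => if i \in phi k' then inflow E m (phi k') xz.2 i
                else xz.2 i + inflow E m (phi k') xz.2 i)
  end.

Definition xalg (R : fieldType) (n : nat) (E : rel 'I_n) (m : R)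
    (phi : nat -> {set 'I_n}) (k : nat) : 'cV[R]_n :=
  \col_i (algo E m phi k).1 i.

(* Main.v *)
Require Import Defs.
From HB Require Import structures.
From mathcomp Require Import all_boot all_order all_algebra.
From mathcomp Require Import all_classical all_reals all_analysis.
From mathcomp Require Import ring lra.
Import Order.TTheory GRing.Theory Num.Theory.
Import numFieldNormedType.Exports.
Local Open Scope classical_set_scope.
Local Open Scope ring_scope.

Section PR.
Variables (R : realType) (n : nat) (E : rel 'I_n) (m : R) (phi : nat -> {set 'I_n}).
Hypothesis Hdeg : forall j, (1 <= outdeg E j)%N.
Hypothesis m0 : 0 < m.
Hypothesis m1 : m < 1.

Local Notation z k := (algo E m phi k).2.
Local Notation x k := (algo E m phi k).1.

Definition Bsum (w : 'I_n -> R) (i : 'I_n) : R :=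
  \sum_(j < n | E j i) (1 - m) / (outdeg E j)%:R * w j.

Lemma colsum w : \sum_i Bsum w i = (1 - m) * \sum_j w j.
Proof.
rewrite /Bsum (exchange_big_dep xpredT) //= big_distrr; apply: eq_bigr => j _.
have -> : \sum_(i < n | E j i) (1 - m) / (outdeg E j)%:R * w j
   = \sum_(i in [set i : 'I_n | E j i]%SET) (1 - m) / (outdeg E j)%:R * w j.
  by apply: eq_bigl => i; rewrite inE.
rewrite sumr_const -/(outdeg E j) -[RHS]/((1 - m) * w j).
have dn : (outdeg E j)%:R != 0 :> R by rewrite pnatr_eq0 -lt0n Hdeg.
rewrite -mulr_natr; field; exact: dn.
Qed.

Lemma BsumB u v i : Bsum (fun j => u j - v j) i = Bsum u i - Bsum v i.
Proof. by rewrite /Bsum -sumrB; apply: eq_bigr => j _; rewrite mulrBr. Qed.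

Lemma inflowE P w i : inflow E m P w i = Bsum (fun j => if j \in P then w j else 0) i.
Proof.
rewrite /inflow /Bsum big_mkcondr /=; apply: eq_bigr => j _.
by case: (j \in P); rewrite ?mulr0.
Qed.

Lemma Bsum_ge0 w i : (forall j, 0 <= w j) -> 0 <= Bsum w i.
Proof.
move=> h; apply: sumr_ge0 => j _; apply: mulr_ge0 (h j).
apply: divr_ge0; [rewrite subr_ge0; exact: ltW | exact: ler0n].
Qed.

Lemma z_ge0 k i : 0 <= z k i.
Proof.
elim: k i => [|k IH] i /=.
  apply: divr_ge0; [exact: ltW | exact: ler0n].
have h : 0 <= inflow E m (phi k) (algo E m phi k).2 i.
  by rewrite inflowE; apply: Bsum_ge0 => j; case: (j \in phi k).
by case: (i \in phi k) => //; apply: addr_ge0.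
Qed.

Definition s k := \sum_i z k i.

Lemma sS k : s k.+1 = \sum_i (if i \in phi k then (1 - m) * z k i else z k i).
Proof.
rewrite /s /=.
have -> : \sum_i (if i \in phi k then inflow E m (phi k) (z k) i
                  else z k i + inflow E m (phi k) (z k) i)
   = \sum_i (if i \in phi k then 0 else z k i) + \sum_i inflow E m (phi k) (z k) i.
  rewrite -big_split /=; apply: eq_bigr => i _; by case: (i \in phi k); rewrite ?add0r.
rewrite (eq_bigr _ (fun i _ => inflowE (phi k) (z k) i)).
rewrite colsum big_distrr -big_split /=; apply: eq_bigr => i _.
by case: (i \in phi k); rewrite ?mulr0 ?addr0 ?add0r.
Qed.

Lemma sS_le k : s k.+1 <= s k.
Proof.
rewrite sS /s; apply: ler_sum => i _; case: (i \in phi k) => //.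
by rewrite mulrBl mul1r gerBl; apply: mulr_ge0 (ltW m0) (z_ge0 k i).
Qed.

Lemma s_mono k d : s (k + d) <= s k.
Proof.
elim: d => [|d IH]; first by rewrite addn0.
by rewrite addnS; apply: le_trans (sS_le _) IH.
Qed.

Fixpoint fresh (k d : nat) (i : 'I_n) : bool :=
  if d is d'.+1 then (i \notin phi (k + d')) && fresh k d' i else true.

Lemma fresh_le k d i : fresh k d i -> z k i <= z (k + d) i.
Proof.
elim: d => [|d IH] /=; first by rewrite addn0.
case/andP => /negbTE hP /IH h; rewrite addnS /= hP.
apply: le_trans h _; rewrite lerDl inflowE; apply: Bsum_ge0 => j.
by case: (_ \in _) => //; exact: z_ge0.
Qed.

Lemma fresh_s k d :
  s (k + d) <= (1 - m) * s k + m * \sum_i (if fresh k d i then z k i else 0).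
Proof.
elim: d => [|d IH].
  rewrite addn0 /=; rewrite /s; lra.
rewrite addnS sS.
set f := fun i => if fresh k d i then z k i else 0.
have fz : forall i, f i <= z (k + d) i.
  move=> i; rewrite /f; case: ifP => [/fresh_le //|_]; exact: z_ge0.
have key : \sum_i (if i \in phi (k + d) then (1 - m) * z (k + d) i else z (k + d) i)
    - m * \sum_i (if fresh k d.+1 i then z k i else 0)
    <= s (k + d) - m * \sum_i f i.
  rewrite /s !big_distrr -!sumrB; apply: ler_sum => i _ /=.
  rewrite /f; case: (i \in phi (k + d)) (fz i); rewrite /f /=.
    by move=> h; rewrite mulr0 subr0 mulrBl mul1r lerD2l lerN2 ler_pM2l.
  by [].
lra.
Qed.

Lemma fresh_none k d : (forall i, ~~ fresh k d i) -> s (k + d) <= (1 - m) * s k.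
Proof.
move=> h; have := fresh_s k d.
rewrite (eq_bigr (fun _ => 0)); last by move=> i _; rewrite (negbTE (h i)).
by rewrite big1 // mulr0 addr0.
Qed.

Lemma fresh_hit k d t i : (t < d)%N -> i \in phi (k + t) -> ~~ fresh k d i.
Proof.
elim: d => [//|d IH] lt hi /=; rewrite negb_and negbK.
rewrite ltnS leq_eqVlt in lt; case/orP: lt => [/eqP <-|lt]; first by rewrite hi.
by rewrite IH ?orbT.
Qed.


Lemma eq_Bsum u v i : u =1 v -> Bsum u i = Bsum v i.
Proof. by move=> h; apply: eq_bigr => j _; rewrite h. Qed.

Lemma s0 : (0 < n)%N -> s 0 = m.
Proof.
move=> n0; rewrite /s /= sumr_const card_ord -(mulr_natr (m / n%:R)) divfK //.
by rewrite pnatr_eq0 -lt0n.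
Qed.

Lemma s_ge0 k : 0 <= s k.
Proof. by apply: sumr_ge0 => i _; exact: z_ge0. Qed.

Variable xs : 'cV[R]_n.
Hypothesis hx : is_pagerank E m xs.

Definition dv k i := xs i 0 - x k i.

Lemma dv_inv k i : dv k i = Bsum (fun j => dv k j + z k j) i.
Proof.
elim: k i => [|k IH] i.
  have := congr1 (fun M : 'cV[R]_n => M i 0) hx.1; rewrite !mxE => h.
  rewrite /dv /= (@eq_Bsum _ (fun j => xs j 0)); last first.
    by move=> j; rewrite subrK.
  rewrite {1}h big_distrr /= mulr1 addrK /Bsum [RHS]big_mkcond /=.
  apply: eq_bigr => j _; rewrite !mxE; case: (E j i); last by rewrite mul0r mulr0.
  by rewrite mulrA.
rewrite /dv /= opprD addrA -/(dv k i) IH inflowE -BsumB; apply: eq_Bsum => j.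
rewrite /dv /=; case: (j \in phi k).
  rewrite opprD addrA; ring.
ring.
Qed.

Lemma sum_dv k : m * \sum_i `|dv k i| <= (1 - m) * s k.
Proof.
have h : \sum_i `|dv k i| <= (1 - m) * \sum_i (`|dv k i| + z k i).
  rewrite -colsum; apply: ler_sum => i _; rewrite dv_inv.
  apply: le_trans (ler_norm_sum _ _ _) _; rewrite /Bsum; apply: ler_sum => j _.
  rewrite normrM; have cge : 0 <= (1 - m) / (outdeg E j)%:R.
    apply: divr_ge0; [rewrite subr_ge0; exact: ltW | exact: ler0n].
  rewrite (ger0_norm cge); apply: ler_wpM2l => //.
  apply: le_trans (ler_normD _ _) _; by rewrite (ger0_norm (z_ge0 k j)).
rewrite big_split /= -/(s k) in h.
lra.
Qed.


Lemma err_bound k : `|xalg E m phi k - xs| <= (1 - m) / m * s k.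
Proof.
have m0' : m != 0 by rewrite gt_eqF.
have bge : 0 <= (1 - m) / m * s k.
  apply: mulr_ge0; last exact: s_ge0.
  apply: divr_ge0; [rewrite subr_ge0; exact: ltW | exact: ltW].
rewrite [X in X <= _]/Num.norm /= mx_normrE; apply: bigmax_le => // -[a b] _ /=.
rewrite !mxE (ord1 b) distrC -/(dv k a).
rewrite -(ler_pM2l m0).
have -> : m * ((1 - m) / m * s k) = (1 - m) * s k by field.
apply: le_trans (sum_dv k); rewrite ler_pM2l //.
rewrite (bigD1 a) //= lerDl; apply: sumr_ge0 => i _; exact: normr_ge0.
Qed.


Lemma fresh_mono k d d' i : (d <= d')%N -> fresh k d' i -> fresh k d i.
Proof.
elim: d' => [|d' IH]; first by rewrite leqn0 => /eqP ->.
rewrite leq_eqVlt => /orP [/eqP -> //|]; rewrite ltnS => le /= /andP [_ h].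
exact: IH.
Qed.

Lemma windows_exist :
  (forall (i : 'I_n) (N : nat), exists k : nat, (N <= k)%N /\ i \in phi k) ->
  forall k, exists d, forall i, ~~ fresh k d i.
Proof.
move=> Hinf k.
suff H : forall r : seq 'I_n, exists d, forall i, i \in r -> ~~ fresh k d i.
  by have [d hd] := H (enum 'I_n); exists d => i; apply: hd; rewrite mem_enum.
elim => [|a r [d IH]]; first by exists 0%N.
have [k' [kk' ak']] := Hinf a k.
exists (maxn d (k' - k).+1) => i; rewrite in_cons => /orP [/eqP ->|ir].
  apply: (@fresh_hit k _ (k' - k)%N); first by rewrite leq_max leqnn orbT.
  by rewrite subnKC.
apply/negP => /(@fresh_mono k d _ i (leq_maxl d _)); exact/negP/IH.
Qed.

Lemma iter_windows : (forall k, exists d, forall i, ~~ fresh k d i) ->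
  forall N, exists K, s K <= (1 - m) ^+ N * s 0.
Proof.
move=> Hw; elim => [|N [K IH]]; first by exists 0%N; rewrite expr0 mul1r.
have [d hd] := Hw K; exists (K + d)%N.
apply: le_trans (@fresh_none K d hd) _; rewrite exprS -mulrA ler_wpM2l //.
by rewrite subr_ge0 ltW.
Qed.

Lemma conv1 : (0 < n)%N -> (forall k, exists d, forall i, ~~ fresh k d i) ->
  xalg E m phi @ \oo --> xs.
Proof.
move=> n0 Hw; apply/cvgrPdist_le => e e0.
have q1 : `|1 - m| < 1 by rewrite ger0_norm ?subr_ge0 ?ltW // ltrBlDr ltrDl.
have := cvg_expr q1; move/cvgrPdist_le => /(_ e e0) [N _ HN].
have := HN N (leqnn N); rewrite /= sub0r normrN ger0_norm; last first.
  by rewrite exprn_ge0 // subr_ge0 ltW.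
move=> hN.
have [K hK] := iter_windows Hw N.
exists K => // k /= Kk; rewrite distrC.
apply: le_trans (err_bound k) _.
have sk : s k <= (1 - m) ^+ N * m.
  by rewrite (s0 n0) in hK; rewrite -(subnKC Kk); apply: le_trans (s_mono _ _) hK.
have c0 : 0 <= (1 - m) / m by apply: divr_ge0; [rewrite subr_ge0 ltW | rewrite ltW].
apply: le_trans (ler_wpM2l c0 sk) _.
have -> : (1 - m) / m * ((1 - m) ^+ N * m) = (1 - m) * (1 - m) ^+ N.
  by field; rewrite gt_eqF.
apply: le_trans hN; rewrite ger_pMl ?exprn_gt0 ?subr_gt0 //.
by rewrite gerBl ltW.
Qed.


Lemma bern (a : R) k : 0 <= a <= 1 -> 1 - k%:R * a <= (1 - a) ^+ k.
Proof.
case/andP=> a0 a1; elim: k => [|k IH]; first by rewrite mul0r subr0 expr0.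
rewrite exprSr; apply: le_trans (_ : (1 - k%:R * a) * (1 - a) <= _).
  have : 0 <= k%:R * a * a by rewrite mulr_ge0 // mulr_ge0.
  rewrite -natr1; lra.
by rewrite ler_wpM2r // subr_ge0.
Qed.

Lemma conv2 (T : nat) : (0 < n)%N -> (0 < T)%N ->
  (forall (k : nat) (i : 'I_n), exists t : nat, (t < T)%N /\ i \in phi (k + t)%N) ->
  exists C rho : R, 0 < C /\ 0 < rho < 1 /\
    forall k : nat, `|xalg E m phi k - xs| <= C * rho ^+ k.
Proof.
move=> n0 T0 HT.
have Tr : 1 <= T%:R :> R by rewrite ler1n.
have Tr0 : 0 < T%:R :> R by rewrite ltr0n.
have a0 : 0 < m / T%:R by rewrite divr_gt0.
have a1 : m / T%:R <= m by rewrite ler_pdivrMr // ler_peMr // ltW.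
set rho := 1 - m / T%:R.
have r0 : 0 < rho by rewrite /rho subr_gt0; apply: le_lt_trans a1 m1.
have r1 : rho < 1 by rewrite /rho ltrBlDr ltrDl.
have rT : 1 - m <= rho ^+ T.
  have hb' : 0 <= m / T%:R <= 1 by rewrite ltW //= (le_trans a1) // ltW.
  by move: (@bern _ T hb'); rewrite mulrC divfK ?gt_eqF.
have rT0 : 0 < rho ^+ T by rewrite exprn_gt0.
have Hw : forall k, s (k + T) <= (1 - m) * s k.
  move=> k; apply: fresh_none => i.
  by have [t [tT it]] := HT k i; apply: (@fresh_hit k T t i).
have sq : forall q, s (q * T) <= (1 - m) ^+ q * m.
  elim => [|q IH]; first by rewrite mul0n expr0 mul1r s0.
  rewrite mulSn addnC; apply: le_trans (Hw _) _.
  by rewrite exprS -mulrA ler_wpM2l // subr_ge0 ltW.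
exists ((1 - m) / rho ^+ T), rho; split.
  by rewrite divr_gt0 // subr_gt0.
split; first by rewrite r0 r1.
move=> k; apply: le_trans (err_bound k) _.
set q := (k %/ T)%N.
have sk : s k <= (1 - m) ^+ q * m.
  by rewrite {1}(divn_eq k T); apply: le_trans (s_mono _ _) (sq q).
have c0 : 0 <= (1 - m) / m by apply: divr_ge0; [rewrite subr_ge0 ltW | rewrite ltW].
apply: le_trans (ler_wpM2l c0 sk) _.
have -> : (1 - m) / m * ((1 - m) ^+ q * m) = (1 - m) * (1 - m) ^+ q.
  by field; rewrite gt_eqF.
have h1 : (1 - m) ^+ q <= rho ^+ (T * q).
  rewrite exprM; apply: lerXn2r => //; rewrite !nnegrE ?subr_ge0 ?ltW //.
have h2 : rho ^+ (T * q) * rho ^+ T <= rho ^+ k.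
  rewrite -exprD; apply: ler_wiXn2l; [exact: ltW | exact: ltW |].
  by rewrite addnC -mulnS mulnC ltnW // ltn_ceil.
rewrite -mulrA; apply: ler_wpM2l; first by rewrite subr_ge0 ltW.
rewrite -ler_pdivlMr // in h2.
rewrite mulrC; apply: le_trans h1 h2.
Qed.

End PR.

Theorem theorem2 (R : realType) (n : nat) (E : rel 'I_n) (m : R)
    (xs : 'cV[R]_n) (phi : nat -> {set 'I_n}) :
  (2 <= n)%N ->
  (forall j : 'I_n, (1 <= outdeg E j)%N) ->
  0 < m < 1 ->
  is_pagerank E m xs ->
  (forall (i : 'I_n) (N : nat), exists k : nat, (N <= k)%N /\ i \in phi k) ->
  (xalg E m phi @ \oo --> xs)
  /\ ((exists T : nat, (0 < T)%N /\
         forall (k : nat) (i : 'I_n), exists t : nat, (t < T)%N /\ i \in phi (k + t)%N) ->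
      exists C rho : R, 0 < C /\ 0 < rho < 1 /\
        forall k : nat, `|xalg E m phi k - xs| <= C * rho ^+ k).
Proof.
move=> n2 Hdeg /andP [m0 m1] hx Hinf.
have n0 : (0 < n)%N by apply: leq_trans n2.
split.
  exact: (@conv1 R n E m phi Hdeg m0 m1 xs hx n0 (@windows_exist n phi Hinf)).
case=> T [T0 HT].
exact: (@conv2 R n E m phi Hdeg m0 m1 xs hx T n0 T0 HT).
Qed.
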